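(* Let $L\subseteq\Sigma^\omega$ be of the form $L=\bigcup_{i=1}^n U_iV_i^\omega$ where each $U_i\subseteq\Sigma^*$ is Parikh-recognizable and each $V_i\subseteq\Sigma^*$ is regular. Then $L$ is RPBA-recognizable.
   Context: For $V\subseteq\Sigma^*$, $V^\omega=\{w_1w_2\cdots\mid w_i\in V\setminus\{\varepsilon\}\}$. A semi-linear set in $\mathbb{N}^d$ is a finite union of sets $\{b_0+\sum_{j=1}^\ell b_jz_j\mid z_j\in\mathbb{N}\}$ with $b_j\in\mathbb{N}^d$. A Parikh automaton (PA) of dimension $d$ is $(Q,\Sigma,q_0,\Delta,F,C)$ with finite $Q$, $q_0\in Q$, $F\subseteq Q$, finite $\Delta\subseteq Q\times\Sigma\times\mathbb{N}^d\times Q$, semi-linear $C\subseteq\mathbb{N}^d$; it accepts a finite word $x_1\cdots x_n$ if there is a run $r_i=(p_{i-1},x_i,\mathbf{v}_i,p_i)\in\Delta$, $p_0=q_0$, with $p_n\in F$ and $\sum_i\mathbf{v}_i\in C$; Parikh-recognizable languages are those accepted by PA. A reachability Parikh–Büchi automaton (RPBA) is a PA read on infinite words: a run $r_1r_2\cdots$ ($r_i=(p_{i-1},\alpha_i,\mathbf{v}_i,p_i)\in\Delta$, $p_0=q_0$) is accepting if there is $i\ge1$ with $p_i\in F$ and $\sum_{k\le i}\mathbf{v}_k\in C$, and there are infinitely many $j$ with $p_j\in F$. $L$ is RPBA-recognizable if it is the set of infinite words with an accepting run of some RPBA. *)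

(* Defs.v *)
From mathcomp Require Import all_boot.
Set Implicit Arguments. Unset Strict Implicit. Unset Printing Implicit Defensive.

Definition vec (d : nat) := {ffun 'I_d -> nat}.
Definition vzero d : vec d := [ffun=> 0].
Definition vadd d (u v : vec d) : vec d := [ffun i => u i + v i].
Definition vscale d (k : nat) (v : vec d) : vec d := [ffun i => k * v i].

Definition in_linear d (L : vec d * seq (vec d)) (v : vec d) : Prop :=
  exists z : nat -> nat,
    v = vadd L.1 (\big[@vadd d/vzero d]_(j < size L.2) vscale (z j) (nth (vzero d) L.2 j)).

Definition semilinear d := seq (vec d * seq (vec d)).
Definition in_semilinear d (C : semilinear d) (v : vec d) : Prop :=
  exists2 L, L \in C & in_linear L v.

Record PA (S : finType) (d : nat) := MkPA {
  pa_Q : finType;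
  pa_q0 : pa_Q;
  pa_Delta : seq (pa_Q * S * vec d * pa_Q);
  pa_F : {set pa_Q};
  pa_C : semilinear d }.

Definition PA_accepts S d (A : PA S d) (w : seq S) : Prop :=
  exists (p : nat -> pa_Q A) (v : nat -> vec d),
    p 0 = pa_q0 A /\
    (forall i x, i < size w -> (p i, nth x w i, v i, p i.+1) \in pa_Delta A) /\
    p (size w) \in pa_F A /\
    in_semilinear (pa_C A) (\big[@vadd d/vzero d]_(i < size w) v i).

Definition Parikh_recognizable (S : finType) (U : seq S -> Prop) : Prop :=
  exists d (A : PA S d), forall w, U w <-> PA_accepts A w.

(* reachability Parikh-Buchi acceptance of an infinite word alpha : nat -> S.
   Transition r_{i+1} (paper indexing) is (p i, alpha i, v i, p (i+1)). *)
Definition RPBA_accepts S d (A : PA S d) (alpha : nat -> S) : Prop :=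
  exists (p : nat -> pa_Q A) (v : nat -> vec d),
    p 0 = pa_q0 A /\
    (forall i, (p i, alpha i, v i, p i.+1) \in pa_Delta A) /\
    (exists i, 1 <= i /\ p i \in pa_F A /\
               in_semilinear (pa_C A) (\big[@vadd d/vzero d]_(k < i) v k)) /\
    (forall N, exists j, N <= j /\ p j \in pa_F A).

Definition RPBA_recognizable (S : finType) (L : (nat -> S) -> Prop) : Prop :=
  exists d (A : PA S d), forall alpha, L alpha <-> RPBA_accepts A alpha.

Record DFA (S : finType) := MkDFA {
  dfa_Q : finType;
  dfa_q0 : dfa_Q;
  dfa_delta : dfa_Q -> S -> dfa_Q;
  dfa_F : {set dfa_Q} }.

Definition DFA_accepts S (A : DFA S) (w : seq S) : Prop :=
  foldl (@dfa_delta S A) (@dfa_q0 S A) w \in @dfa_F S A.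

Definition regular (S : finType) (V : seq S -> Prop) : Prop :=
  exists A : DFA S, forall w, V w <-> DFA_accepts A w.

Definition start_pos S (ws : nat -> seq S) (k : nat) : nat :=
  \sum_(j < k) size (ws j).

Definition in_UVomega (S : finType) (U V : seq S -> Prop) (alpha : nat -> S) : Prop :=
  exists (u : seq S) (ws : nat -> seq S),
    U u /\
    (forall k, V (ws k) /\ ws k <> [::]) /\
    (forall i x, i < size u -> alpha i = nth x u i) /\
    (forall k i x, i < size (ws k) ->
        alpha (size u + start_pos ws k + i) = nth x (ws k) i).

(* Main.v *)
Require Import Defs.
From mathcomp Require Import all_boot zify.
Set Implicit Arguments. Unset Strict Implicit. Unset Printing Implicit Defensive.
Lemma vbigE d I (r : seq I) (P : pred I) (F : I -> vec d) i :
  (\big[@vadd d/vzero d]_(j <- r | P j) F j) i = \sum_(j <- r | P j) F j i.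
Proof.
apply: (big_morph (fun x : vec d => x i)) => [x y|]; by rewrite ffunE.
Qed.
Lemma vsum_trunc d (v : nat -> vec d) s i :
  s <= i -> (forall k, s <= k -> v k = vzero d) ->
  \big[@vadd d/vzero d]_(k < i) v k = \big[@vadd d/vzero d]_(k < s) v k.
Proof.
move=> si Hz; apply/ffunP => j; rewrite !vbigE.
rewrite -(subnKC si); elim: (i - s) => [|m IH]; first by rewrite addn0.
rewrite addnS big_ord_recr /= IH Hz ?ffunE ?addn0 //; exact: leq_addr.
Qed.

Section SP.
Variables (S : finType) (ws : nat -> seq S).
Hypothesis Hne : forall k, ws k <> [::].
Lemma spS k : start_pos ws k.+1 = start_pos ws k + size (ws k).
Proof. by rewrite /start_pos big_ord_recr. Qed.
Lemma sp0 : start_pos ws 0 = 0.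
Proof. by rewrite /start_pos big_ord0. Qed.
Lemma size_pos k : 0 < size (ws k).
Proof. by move: (@Hne k); case: (ws k). Qed.
Lemma sp_lt k k' : k < k' -> start_pos ws k < start_pos ws k'.
Proof.
elim: k' => // k' IH; rewrite ltnS leq_eqVlt => /orP [/eqP ->|/IH h]; rewrite spS.
  by rewrite -addn1 leq_add2l size_pos.
apply: leq_trans h _; exact: leq_addr.
Qed.
Lemma sp_le k k' : k <= k' -> start_pos ws k <= start_pos ws k'.
Proof. by rewrite leq_eqVlt => /orP [/eqP ->//|/sp_lt/ltnW]. Qed.
Lemma sp_ge k : k <= start_pos ws k.
Proof. elim: k => [//|k IH]; rewrite spS -addn1 leq_add //; exact: size_pos. Qed.
Lemma sp_block j : exists k, start_pos ws k <= j < start_pos ws k.+1.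
Proof.
elim: j => [|j [k /andP [h1 h2]]].
  by exists 0; rewrite sp0 spS sp0 add0n size_pos.
case: (ltnP j.+1 (start_pos ws k.+1)) => h3.
  by exists k; rewrite h3 andbT (leq_trans h1).
exists k.+1; have e : start_pos ws k.+1 = j.+1 by apply/eqP; rewrite eqn_leq h2 h3.
by rewrite e leqnn /= -e sp_lt.
Qed.
Lemma sp_inj k k' : start_pos ws k = start_pos ws k' -> k = k'.
Proof.
move=> e; case: (ltngtP k k') => // /sp_lt; by rewrite e ltnn.
Qed.
End SP.
Section Single.
Variables (S : finType) (d : nat) (A : PA S d) (B : DFA S).

Definition QU := (pa_Q A + (dfa_Q B * bool))%type.
Definition srcU (s : QU) : option (dfa_Q B) :=
  match s with inl p => if p \in pa_F A then Some (dfa_q0 B) else None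
             | inr qb => Some qb.1 end.
Definition vstep (s : QU) (a : S) (s' : QU) : bool :=
  match srcU s with None => false
  | Some q => (s' == inr (dfa_delta q a, false))
              || ((dfa_delta q a \in dfa_F B) && (s' == inr (dfa_q0 B, true))) end.
Definition DeltaU : seq (QU * S * vec d * QU) :=
  [seq (inl t.1.1.1, t.1.1.2, t.1.2, inl t.2) | t <- pa_Delta A] ++
  [seq (x.1.1, x.1.2, vzero d, x.2) | x <- enum [pred x : QU * S * QU | vstep x.1.1 x.1.2 x.2]].
Definition FU : {set QU} := [set inr (dfa_q0 B, true)].
Definition AU : PA S d := @MkPA S d QU (inl (pa_q0 A)) DeltaU FU (pa_C A).

Lemma memU s a w s' : (s, a, w, s') \in DeltaU <->
  (exists p p', [/\ s = inl p, s' = inl p' & (p, a, w, p') \in pa_Delta A])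
  \/ (w = vzero d /\ vstep s a s').
Proof.
rewrite mem_cat; split.
  case/orP => /mapP [t Ht [-> -> -> ->]].
    by left; exists t.1.1.1, t.2; split => //; case: t Ht => [[[]]].
  by right; move: Ht; rewrite mem_enum inE.
case=> [[p [p' [-> -> H]]]|[-> H]]; apply/orP.
  by left; apply/mapP; exists (p, a, w, p').
by right; apply/mapP; exists (s, a, s') => //; rewrite mem_enum inE.
Qed.

Fixpoint rr (bnd : nat -> bool) (f : nat -> S) (j : nat) : dfa_Q B :=
  match j with 0 => dfa_q0 B
  | j'.+1 => if bnd j'.+1 then dfa_q0 B else dfa_delta (rr bnd f j') (f j') end.

Lemma rrb (bnd : nat -> bool) (f : nat -> S) j : bnd j -> rr bnd f j = dfa_q0 B.
Proof. by case: j => //= j ->. Qed.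
Lemma rrS (bnd : nat -> bool) (f : nat -> S) j : rr bnd f j.+1 = if bnd j.+1 then dfa_q0 B else dfa_delta (rr bnd f j) (f j).
Proof. by []. Qed.

Lemma fwd (U V : seq S -> Prop) :
  (forall w, U w <-> PA_accepts A w) -> (forall w, V w <-> DFA_accepts B w) ->
  forall alpha, in_UVomega U V alpha -> RPBA_accepts AU alpha.
Proof.
move=> HU HV alpha [u [ws [Uu [Hws [Hu Hw]]]]].
have [pA [vA [p0 [Htr [pF Csum]]]]] := (HU u).1 Uu.
have Hne k : ws k <> [::] by case: (Hws k).
set s := size u.
pose bnd j := [exists k : 'I_j.+1, start_pos ws k == j].
have bndP j : reflect (exists k, start_pos ws k = j) (bnd j).
  apply: (iffP existsP) => [[k /eqP <-]|[k e]]; first by exists k.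
  have kj : k < j.+1 by rewrite ltnS -e sp_ge.
  by exists (Ordinal kj); rewrite /= e.
pose r := rr bnd (fun j => alpha (s + j)).
have rb j : bnd j -> r j = dfa_q0 B by apply: rrb.
have nonb k t : 0 < t < size (ws k) -> ~~ bnd (start_pos ws k + t).
  move=> /andP [t0 ts]; apply/bndP => [[k' e]].
  have h1 : start_pos ws k < start_pos ws k' by rewrite e -{1}[start_pos ws k]addn0 ltn_add2l.
  have h2 : start_pos ws k' < start_pos ws k.+1 by rewrite e spS ltn_add2l.
  have : k < k' by case: (ltnP k k') => // /(sp_le Hne); rewrite leqNgt h1.
  have : k' < k.+1 by case: (ltnP k' k.+1) => // /(sp_le Hne); rewrite leqNgt h2.
  by rewrite ltnS => a b; move: (leq_trans b a); rewrite ltnn.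
have inv k t : t < size (ws k) ->
    r (start_pos ws k + t) = foldl (@dfa_delta S B) (dfa_q0 B) (take t (ws k)).
  elim: t => [_|t IH ts].
    by rewrite addn0 take0 /= rb //; apply/bndP; exists k.
  rewrite addnS /r rrS -/r ifN; last by rewrite -addnS; apply: nonb; rewrite ts.
  rewrite IH ?(ltnW ts) // (take_nth (alpha 0) (ltnW ts)) foldl_rcons.
  by rewrite addnA (Hw k t (alpha 0) (ltnW ts)).
pose p i : QU := if i <= s then inl (pA i) else inr (r (i - s), bnd (i - s)).
pose v i := if i < s then vA i else vzero d.
have pfin j : 0 < j -> bnd j -> p (s + j) \in FU.
  by move=> j0 bj; rewrite /p -{2}[s]addn0 leq_add2l leqNgt j0 /= addKn rb // inE bj eqxx.
exists p, v; split; first by rewrite /p leq0n /= p0.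
split.
  move=> i; apply/memU; case: (ltnP i s) => his.
    left; exists (pA i), (pA i.+1); rewrite /p (ltnW his) his /v his; split => //.
    by rewrite (Hu i (alpha 0) his); apply: Htr.
  right; rewrite /v ltnNge his /=; split => //.
  have [j ->] : exists j, i = s + j by exists (i - s); rewrite subnKC.
  have src : srcU (p (s + j)) = Some (r j).
    rewrite /p; case: j => [|j]; first by rewrite addn0 leqnn /= pF.
    have -> : (s + j.+1 <= s) = false by rewrite addnS ltnNge leq_addr.
    by rewrite /= addKn.
  have pS : p (s + j).+1 = inr (r j.+1, bnd j.+1).
    rewrite /p -addnS.
    have -> : (s + j.+1 <= s) = false by rewrite addnS ltnNge leq_addr.
    by rewrite /= addKn.
  rewrite /vstep src pS /=.
  case Hb : (bnd j.+1).
    apply/orP; right; rewrite (rb _ Hb) eqxx andbT.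
    have [k /andP [h1 h2]] := sp_block Hne j.
    have [k' e] := bndP _ Hb.
    have e2 : start_pos ws k.+1 = j.+1.
      have kk : k < k'.
        rewrite ltnNge; apply/negP => /(sp_le Hne); rewrite e => h.
        by move: (leq_trans h h1); rewrite ltnn.
      by apply/eqP; rewrite eqn_leq h2 -e andbT; apply: (sp_le Hne).
    have [t et] : exists t, j = start_pos ws k + t by exists (j - start_pos ws k); rewrite subnKC.
    have ts : t < size (ws k) by rewrite -(ltn_add2l (start_pos ws k)) -et -spS e2.
    rewrite et inv // addnA (Hw k t (alpha 0) ts) -foldl_rcons -take_nth //.
    have : t.+1 = size (ws k).
      by apply/eqP; rewrite -(eqn_add2l (start_pos ws k)) addnS -et -spS e2.
    by move=> ->; rewrite take_size; apply: (HV _).1; case: (Hws k).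
  by rewrite /r rrS -/r Hb eqxx.
split.
  exists (s + size (ws 0)); split; first by rewrite addn_gt0 size_pos ?orbT.
  split; first by apply: pfin; [exact: size_pos|apply/bndP; exists 1; rewrite spS sp0].
  rewrite (@vsum_trunc _ _ s); first last.
  - by move=> k; rewrite /v ltnNge => ->.
  - exact: leq_addr.
  by rewrite (eq_bigr (fun k : 'I_s => vA k)) // => k _; rewrite /v ltn_ord.
move=> N; exists (s + start_pos ws N.+1); split.
  by apply: leq_trans (leq_addl _ _); apply: leq_trans (sp_ge Hne _); exact: leqnSn.
apply: pfin; last by apply/bndP; exists N.+1.
by apply: leq_trans (sp_ge Hne _).
Qed.

Definition isr (q : QU) := if q is inr _ then true else false.
Lemma vstep_isr s a s' : vstep s a s' -> isr s'.
Proof.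
rewrite /vstep; case: (srcU s) => // q.
by case/orP => [/eqP->|/andP [_ /eqP->]].
Qed.

Lemma bwd (U V : seq S -> Prop) :
  (forall w, U w <-> PA_accepts A w) -> (forall w, V w <-> DFA_accepts B w) ->
  forall alpha, RPBA_accepts AU alpha -> in_UVomega U V alpha.
Proof.
move=> HU HV alpha [p [v [p0 [Htr [[i0 [i01 [pi0 Ci0]]] Hinf]]]]].
have T1 i : isr (p i.+1) -> v i = vzero d /\ vstep (p i) (alpha i) (p i.+1).
  move=> h; case/memU: (Htr i) => [[x [y [_ e _]]]|//].
  by move: h; rewrite e.
have T2 i : isr (p i) -> isr (p i.+1).
  move=> h; case/memU: (Htr i) => [[x [y [e _ _]]]|[_ /vstep_isr//]].
  by move: h; rewrite e.
have FUr j : p j \in FU -> p j = inr (dfa_q0 B, true) by rewrite inE => /eqP.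
have exR : exists m, isr (p m).
  by have [j [_ /FUr h]] := Hinf 0; exists j; rewrite h.
case: (ex_minnP exR) => m pm mmin.
have m0 : 0 < m by case: m pm mmin => [|m] //; rewrite p0.
set s := m.-1.
have sm : s.+1 = m by rewrite /s prednK.
have notr i : i <= s -> ~~ isr (p i).
  move=> his; apply/negP => /mmin; rewrite -sm => h.
  by move: (leq_trans h his); rewrite ltnn.
have isrr i : s < i -> isr (p i).
  rewrite sm; elim: i => [|i IH]; first by rewrite leqNgt m0.
  rewrite leq_eqVlt ltnS => /orP [/eqP <-//|h].
  exact/T2/IH.
pose pA i := if p i is inl q then q else pa_q0 A.
have pAE i : i <= s -> p i = inl (pA i).
  by move/notr; rewrite /pA; case: (p i).
pose u := mkseq alpha s.
have Uu : U u.
  apply/HU; exists pA, v; split; first by rewrite /pA p0.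
  rewrite size_mkseq; split.
    move=> i x his; rewrite nth_mkseq //.
    case/memU: (Htr i) => [[x' [y [e1 e2 H]]]|[_ /vstep_isr]].
      by rewrite /pA e1 e2.
    by rewrite (negbTE (notr _ his)).
  split.
    have [_ vs] := T1 s (isrr _ (ltnSn s)).
    move: vs; rewrite /vstep (pAE s (leqnn s)) /=.
    by case: ifP.
  have si0 : s <= i0.
    rewrite leqNgt; apply/negP => h.
    by move: (notr _ (ltnW h)); rewrite (FUr _ pi0).
  rewrite -(@vsum_trunc _ _ s i0) //.
  by move=> k sk; case: (T1 k (isrr k.+1 sk)).
have exF N : exists j, (N < j) && (p j \in FU).
  by have [j [h1 h2]] := Hinf N.+1; exists j; rewrite h1 h2.
pose g N := ex_minn (exF N).
have gP N : [/\ N < g N, p (g N) \in FU & forall j, N < j -> p j \in FU -> g N <= j].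
  rewrite /g; case: (ex_minnP (exF N)) => j /andP [h1 h2] h3; split => //.
  by move=> j' a b; apply: h3; rewrite a b.
pose f := fix f k := if k is k'.+1 then g (f k') else s.
have fS k : f k.+1 = g (f k) by [].
have fs k : s <= f k.
  elim: k => // k IH; rewrite fS; case: (gP (f k)) => h _ _.
  exact: leq_trans IH (ltnW h).
have flt k : f k < f k.+1 by rewrite fS; case: (gP (f k)).
pose cs j := match p j with inl _ => dfa_q0 B | inr qb => qb.1 end.
have stepB j : s <= j ->
   p j.+1 = inr (dfa_delta (cs j) (alpha j), false) \/
   (dfa_delta (cs j) (alpha j) \in dfa_F B /\ p j.+1 = inr (dfa_q0 B, true)).
  move=> sj; have [_] := T1 j (isrr _ (leq_ltn_trans sj (ltnSn j))).
  rewrite /vstep /cs; case: (p j) => [x|[q b]] /=; first case: ifP => // _.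
    by case/orP => [/eqP ->|/andP [h /eqP ->]]; [left|right].
  by case/orP => [/eqP ->|/andP [h /eqP ->]]; [left|right].
have cs0 k : cs (f k) = dfa_q0 B.
  case: k => [|k]; first by rewrite /cs /= (pAE s (leqnn s)).
  by rewrite /cs fS; case: (gP (f k)) => _ /FUr -> _.
pose ws k := mkseq (fun i => alpha (f k + i)) (f k.+1 - f k).
have szws k : size (ws k) = f k.+1 - f k by rewrite size_mkseq.
have inv k t : f k + t < f k.+1 ->
    cs (f k + t) = foldl (@dfa_delta S B) (dfa_q0 B) (take t (ws k)).
  elim: t => [_|t IH h]; first by rewrite addn0 take0 cs0.
  have h' : f k + t < f k.+1 by apply: leq_trans h; rewrite addnS.
  have tsz : t < size (ws k) by rewrite szws; lia.
  rewrite (take_nth (alpha 0) tsz) foldl_rcons -IH // nth_mkseq; last by lia.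
  case: (stepB (f k + t)); first by apply: leq_trans (fs k) (leq_addr _ _).
    by rewrite /cs addnS => ->.
  move=> [_ e]; have : p (f k + t).+1 \in FU by rewrite e inE.
  rewrite -addnS => H; have [_ _ gmin] := gP (f k).
  have := gmin (f k + t.+1) ltac:(lia) H.
  by rewrite -fS; lia.
have Vws k : V (ws k).
  apply/HV; rewrite /DFA_accepts.
  have [t et] : exists t, f k.+1 = (f k + t).+1.
    by exists (f k.+1 - f k).-1; have := flt k; lia.
  have tsz : t < size (ws k) by rewrite szws; lia.
  rewrite -(take_size (ws k)) szws.
  have -> : f k.+1 - f k = t.+1 by lia.
  rewrite (take_nth (alpha 0) tsz) foldl_rcons -inv; last by lia.
  rewrite nth_mkseq; last by lia.
  case: (stepB (f k + t)); first by apply: leq_trans (fs k) (leq_addr _ _).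
    move=> E; have : p (f k.+1) \in FU by rewrite fS; case: (gP (f k)).
    by move/FUr; rewrite et E; congruence.
  by case.
have spE k : start_pos ws k = f k - s.
  elim: k => [|k IH]; first by rewrite sp0 subnn.
  by rewrite spS IH szws; have := fs k; have := flt k; lia.
exists u, ws; split => //; split.
  move=> k; split => //; apply/eqP; rewrite -size_eq0 szws; have := flt k; lia.
split.
  by move=> i x; rewrite size_mkseq => h; rewrite nth_mkseq.
move=> k i x; rewrite szws size_mkseq spE => h.
rewrite nth_mkseq // subnKC //.
Qed.
End Single.
Lemma vaddA d (a b c : vec d) : vadd (vadd a b) c = vadd a (vadd b c).
Proof. by apply/ffunP => i; rewrite !ffunE addnA. Qed.
Lemma vadd0l d (a : vec d) : vadd (vzero d) a = a.
Proof. by apply/ffunP => i; rewrite !ffunE. Qed.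

Definition vget n (x : vec n) (k : nat) : nat :=
  if (insub k : option 'I_n) is Some j then x j else 0.

Lemma vgetE n (x : vec n) (j : 'I_n) : vget x j = x j.
Proof. by rewrite /vget valK. Qed.
Lemma vget_out n (x : vec n) k : n <= k -> vget x k = 0.
Proof. by move=> h; rewrite /vget insubN // -leqNgt. Qed.
Lemma vget_ffun n (F : 'I_n -> nat) k :
  vget [ffun i => F i] k = vget [ffun i => F i] k.
Proof. by []. Qed.
Lemma vec_ext n (x y : vec n) : (forall k, vget x k = vget y k) -> x = y.
Proof. by move=> h; apply/ffunP => j; rewrite -!vgetE h. Qed.
Lemma vget_add n (x y : vec n) k : vget (vadd x y) k = vget x k + vget y k.
Proof. by rewrite /vget; case: insub => // j; rewrite ffunE. Qed.
Lemma vget_zero n k : vget (vzero n) k = 0.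
Proof. by rewrite /vget; case: insub => // j; rewrite ffunE. Qed.
Lemma vget_scale n c (x : vec n) k : vget (vscale c x) k = c * vget x k.
Proof. by rewrite /vget; case: insub => [j|]; rewrite ?ffunE ?muln0. Qed.
Lemma vget_big n I (r : seq I) (P : pred I) (F : I -> vec n) k :
  vget (\big[@vadd n/vzero n]_(j <- r | P j) F j) k = \sum_(j <- r | P j) vget (F j) k.
Proof.
apply: (big_morph (fun x : vec n => vget x k)) => [x y|]; [exact: vget_add|exact: vget_zero].
Qed.

Section LinEmb.
Variables (d D : nat) (e : vec d -> vec D) (m : vec D).
Hypothesis eadd : forall a b, e (vadd a b) = vadd (e a) (e b).
Hypothesis ezero : e (vzero d) = vzero D.
Hypothesis escale : forall c a, e (vscale c a) = vscale c (e a).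
Lemma lin_emb (b : vec d) (ps : seq (vec d)) (z : nat -> nat) :
  vadd (vadd m (e b)) (\big[@vadd D/vzero D]_(j < size (map e ps)) vscale (z j) (nth (vzero D) (map e ps) j))
  = vadd m (e (vadd b (\big[@vadd d/vzero d]_(j < size ps) vscale (z j) (nth (vzero d) ps j)))).
Proof.
rewrite eadd vaddA; congr (vadd m (vadd (e b) _)).
rewrite (big_morph e eadd ezero) size_map; apply: eq_bigr => j _.
by rewrite (nth_map (vzero d)) // escale.
Qed.
End LinEmb.

Section SemiMark.
Variables (d d' D : nat) (e : vec d -> vec D) (m : vec D) (e' : vec d' -> vec D) (m' : vec D).
Hypothesis eadd : forall a b, e (vadd a b) = vadd (e a) (e b).
Hypothesis ezero : e (vzero d) = vzero D.
Hypothesis escale : forall c a, e (vscale c a) = vscale c (e a).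
Hypothesis eadd' : forall a b, e' (vadd a b) = vadd (e' a) (e' b).
Hypothesis ezero' : e' (vzero d') = vzero D.
Hypothesis escale' : forall c a, e' (vscale c a) = vscale c (e' a).
Hypothesis ecancel : forall a b, vadd m (e a) = vadd m (e b) -> a = b.
Hypothesis esep : forall a b, vadd m (e a) <> vadd m' (e' b).

Lemma semi_mark (C : semilinear d) (C' : semilinear d') x :
  in_semilinear ([seq (vadd m (e L.1), map e L.2) | L <- C] ++
                 [seq (vadd m' (e' L.1), map e' L.2) | L <- C']) (vadd m (e x))
  <-> in_semilinear C x.
Proof.
split.
  case=> L'; rewrite mem_cat => /orP [] /mapP [L HL ->] [z /= Hz].
    by exists L => //; exists z; apply: ecancel; rewrite Hz lin_emb.
  by exfalso; move: Hz; rewrite lin_emb //; apply: esep.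
case=> L HL [z Hz]; exists (vadd m (e L.1), map e L.2).
  by rewrite mem_cat; apply/orP; left; apply/mapP; exists L.
by exists z; rewrite /= lin_emb // Hz.
Qed.
End SemiMark.

Lemma semi_catC d (C1 C2 : semilinear d) x :
  in_semilinear (C1 ++ C2) x <-> in_semilinear (C2 ++ C1) x.
Proof.
by split; case=> L HL H; exists L => //; move: HL; rewrite !mem_cat orbC.
Qed.

Lemma sum_shift d D (e : vec d -> vec D) (m : vec D)
  (eadd : forall a b, e (vadd a b) = vadd (e a) (e b)) (ezero : e (vzero d) = vzero D)
  (v : nat -> vec D) (w : nat -> vec d) i :
  v 0 = vadd m (e (w 0)) -> (forall k, 0 < k -> v k = e (w k)) ->
  \big[@vadd D/vzero D]_(k < i.+1) v k = vadd m (e (\big[@vadd d/vzero d]_(k < i.+1) w k)).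
Proof.
move=> h0 hk; rewrite !big_ord_recl eadd h0 vaddA (big_morph e eadd ezero).
by congr (vadd m (vadd _ _)); apply: eq_bigr => j _; rewrite hk.
Qed.

Section Branch.
Variables (S : finType) (d D : nat) (Ab : PA S d) (A' : PA S D).
Variables (io : pa_Q Ab -> pa_Q A') (e : vec d -> vec D) (m : vec D) (pj : vec D -> vec d).
Hypothesis Hi : injective io.
Hypothesis eadd : forall a b, e (vadd a b) = vadd (e a) (e b).
Hypothesis ezero : e (vzero d) = vzero D.
Hypothesis H0f : forall a v q', (pa_q0 Ab, a, v, q') \in pa_Delta Ab ->
  (pa_q0 A', a, vadd m (e v), io q') \in pa_Delta A'.
Hypothesis H0b : forall a w q', (pa_q0 A', a, w, io q') \in pa_Delta A' ->
  (pa_q0 Ab, a, pj w, q') \in pa_Delta Ab /\ w = vadd m (e (pj w)).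
Hypothesis Hsf : forall q a v q', (q, a, v, q') \in pa_Delta Ab ->
  (io q, a, e v, io q') \in pa_Delta A'.
Hypothesis Hsb : forall q a w s', (io q, a, w, s') \in pa_Delta A' ->
  exists q', [/\ s' = io q', (q, a, pj w, q') \in pa_Delta Ab & w = e (pj w)].
Hypothesis HF : forall q, (io q \in pa_F A') = (q \in pa_F Ab).
Hypothesis HC : forall x, in_semilinear (pa_C A') (vadd m (e x)) <-> in_semilinear (pa_C Ab) x.

Lemma branch_f alpha : RPBA_accepts Ab alpha -> RPBA_accepts A' alpha.
Proof.
move=> [p [v [p0 [Htr [[i [i1 [pi Ci]]] Hinf]]]]].
exists (fun i => if i is _.+1 then io (p i) else pa_q0 A').
exists (fun i => if i is 0 then vadd m (e (v 0)) else e (v i)).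
split => //; split.
  by case=> [|i']; [apply: H0f; rewrite -p0; apply: Htr | apply: Hsf].
split.
  case: i i1 pi Ci => // i _ pi Ci; exists i.+1; split => //; split; first by rewrite HF.
  rewrite (@sum_shift _ _ _ m eadd ezero (fun k => if k is 0 then vadd m (e (v 0)) else e (v k)) v) //.
    exact/HC.
  by case.
move=> N; have [j [h1 h2]] := Hinf N.+1; exists j; split; first exact: ltnW.
by case: j h1 h2 => // j _; rewrite HF.
Qed.

Lemma branch_b alpha (p : nat -> pa_Q A') (v : nat -> vec D) :
  p 0 = pa_q0 A' ->
  (forall i, (p i, alpha i, v i, p i.+1) \in pa_Delta A') ->
  (exists i, 1 <= i /\ p i \in pa_F A' /\
     in_semilinear (pa_C A') (\big[@vadd D/vzero D]_(k < i) v k)) ->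
  (forall N, exists j, N <= j /\ p j \in pa_F A') ->
  (exists q, p 1 = io q) -> RPBA_accepts Ab alpha.
Proof.
move=> p0 Htr [i0 [i01 [pi0 Ci0]]] Hinf [q1 pq1].
have ex i : 0 < i -> exists q, p i = io q.
  elim: i => // i IH _; case: i IH => [_|i IH]; first by exists q1.
  have [q e1] := IH isT; have := Htr i.+1; rewrite e1 => /Hsb [q' [-> _ _]].
  by exists q'.
pose qq i := if i is 0 then pa_q0 Ab else odflt (pa_q0 Ab) [pick q | io q == p i].
have qqE i : 0 < i -> p i = io (qq i).
  case: i => // i _; have [q e1] := ex i.+1 isT; rewrite /qq.
  by case: pickP => [q' /eqP //|/(_ q)]; rewrite e1 eqxx.
have v0 : v 0 = vadd m (e (pj (v 0))).
  by have := Htr 0; rewrite pq1 p0 => /H0b [].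
have vk k : 0 < k -> v k = e (pj (v k)).
  by move=> k0; have := Htr k; rewrite (qqE k k0) => /Hsb [q' []].
exists qq, (fun i => pj (v i)); split => //; split.
  case=> [|i].
    by have := Htr 0; rewrite p0 (qqE 1 isT) => /H0b [].
  have := Htr i.+1; rewrite (qqE i.+1 isT) => /Hsb [q' [e1 H _]].
  by rewrite (Hi (etrans (esym e1) (qqE i.+2 isT))) in H.
split.
  exists i0; split => //; split; first by rewrite -HF -qqE.
  case: i0 i01 pi0 Ci0 => // i _ _; rewrite (@sum_shift _ _ _ m eadd ezero v (fun k => pj (v k))) //.
  by move/HC.
move=> N; have [j [h1 h2]] := Hinf N.+1; exists j; split; first exact: ltnW.
by rewrite -HF -qqE //; apply: leq_trans h1.
Qed.
End Branch.

Section Union.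
Variables (S : finType) (d1 d2 : nat) (A1 : PA S d1) (A2 : PA S d2).
Notation D := (d1 + d2 + 2).
Definition emb1 (x : vec d1) : vec D := [ffun i : 'I_D => vget x i].
Definition emb2 (x : vec d2) : vec D := [ffun i : 'I_D => if d1 <= i then vget x (i - d1) else 0].
Definition mk1 : vec D := [ffun i : 'I_D => nat_of_bool (val i == d1 + d2)].
Definition mk2 : vec D := [ffun i : 'I_D => nat_of_bool (val i == (d1 + d2).+1)].
Definition pr1 (y : vec D) : vec d1 := [ffun j : 'I_d1 => vget y j].
Definition pr2 (y : vec D) : vec d2 := [ffun j : 'I_d2 => vget y (d1 + j)].

Lemma vget_ff n (F : nat -> nat) k : (forall k, n <= k -> F k = 0) ->
  vget ([ffun i : 'I_n => F i]) k = F k.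
Proof.
move=> h; case: (ltnP k n) => kn; last by rewrite vget_out // h.
by rewrite (vgetE _ (Ordinal kn)) ffunE.
Qed.
Lemma vget_emb1 x k : vget (emb1 x) k = vget x k.
Proof. by rewrite /emb1 (@vget_ff _ (fun i => vget x i)) // => j h; rewrite vget_out //; lia. Qed.
Lemma vget_emb2 x k : vget (emb2 x) k = if d1 <= k then vget x (k - d1) else 0.
Proof. by rewrite /emb2 (@vget_ff _ (fun i => if d1 <= i then vget x (i - d1) else 0)) // => j h; rewrite vget_out; [case: ifP|lia]. Qed.
Lemma vget_mk1 k : vget mk1 k = (k == d1 + d2).
Proof. rewrite /mk1 (@vget_ff _ (fun i => nat_of_bool (i == d1 + d2))) // => j h; case: eqP => //; lia. Qed.
Lemma vget_mk2 k : vget mk2 k = (k == (d1 + d2).+1).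
Proof. rewrite /mk2 (@vget_ff _ (fun i => nat_of_bool (i == (d1 + d2).+1))) // => j h; case: eqP => //; lia. Qed.

Lemma pr1K x : pr1 (emb1 x) = x.
Proof. by apply/ffunP => j; rewrite ffunE vget_emb1 vgetE. Qed.
Lemma pr1mK x : pr1 (vadd mk1 (emb1 x)) = x.
Proof.
apply/ffunP => j; rewrite ffunE vget_add vget_emb1 vgetE vget_mk1.
by case: eqP => //; have := ltn_ord j; lia.
Qed.
Lemma pr2K x : pr2 (emb2 x) = x.
Proof.
by apply/ffunP => j; rewrite ffunE vget_emb2 leq_addr addKn vgetE.
Qed.
Lemma pr2mK x : pr2 (vadd mk2 (emb2 x)) = x.
Proof.
apply/ffunP => j; rewrite ffunE vget_add vget_emb2 leq_addr addKn vgetE vget_mk2.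
by case: eqP => //; have := ltn_ord j; lia.
Qed.

Lemma emb1_add a b : emb1 (vadd a b) = vadd (emb1 a) (emb1 b).
Proof. by apply: vec_ext => k; rewrite !(vget_add, vget_emb1). Qed.
Lemma emb1_zero : emb1 (vzero d1) = vzero D.
Proof. by apply: vec_ext => k; rewrite !(vget_zero, vget_emb1). Qed.
Lemma emb1_scale c a : emb1 (vscale c a) = vscale c (emb1 a).
Proof. by apply: vec_ext => k; rewrite !(vget_scale, vget_emb1). Qed.
Lemma emb2_add a b : emb2 (vadd a b) = vadd (emb2 a) (emb2 b).
Proof. by apply: vec_ext => k; rewrite !(vget_add, vget_emb2); case: ifP; rewrite ?vget_add. Qed.
Lemma emb2_zero : emb2 (vzero d2) = vzero D.
Proof. by apply: vec_ext => k; rewrite !(vget_zero, vget_emb2); case: ifP; rewrite ?vget_zero. Qed.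
Lemma emb2_scale c a : emb2 (vscale c a) = vscale c (emb2 a).
Proof. by apply: vec_ext => k; rewrite !(vget_scale, vget_emb2); case: ifP; rewrite ?vget_scale ?muln0. Qed.

Lemma sep12 a b : vadd mk1 (emb1 a) <> vadd mk2 (emb2 b).
Proof.
move/(congr1 (fun y => vget y (d1 + d2))).
rewrite !vget_add vget_emb1 vget_emb2 vget_mk1 vget_mk2 leq_addr addKn.
rewrite !vget_out //; [lia | exact: leq_addr].
Qed.

Definition QV := option (pa_Q A1 + pa_Q A2).
Definition DeltaV : seq (QV * S * vec D * QV) :=
  [seq (None, t.1.1.2, vadd mk1 (emb1 t.1.2), Some (inl t.2)) | t <- pa_Delta A1 & t.1.1.1 == pa_q0 A1]
  ++ [seq (None, t.1.1.2, vadd mk2 (emb2 t.1.2), Some (inr t.2)) | t <- pa_Delta A2 & t.1.1.1 == pa_q0 A2]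
  ++ [seq (Some (inl t.1.1.1), t.1.1.2, emb1 t.1.2, Some (inl t.2)) | t <- pa_Delta A1]
  ++ [seq (Some (inr t.1.1.1), t.1.1.2, emb2 t.1.2, Some (inr t.2)) | t <- pa_Delta A2].
Definition FV : {set QV} := [set x : QV | match x with
  | Some (inl q) => q \in pa_F A1 | Some (inr q) => q \in pa_F A2 | None => false end].
Definition CV : semilinear D :=
  [seq (vadd mk1 (emb1 L.1), map emb1 L.2) | L <- pa_C A1] ++
  [seq (vadd mk2 (emb2 L.1), map emb2 L.2) | L <- pa_C A2].
Definition AV : PA S D := @MkPA S D QV None DeltaV FV CV.

Lemma memV s a w s' : (s, a, w, s') \in DeltaV ->
  [\/ exists2 t, t \in pa_Delta A1 & [/\ t.1.1.1 = pa_q0 A1, s = None, a = t.1.1.2, w = vadd mk1 (emb1 t.1.2) & s' = Some (inl t.2)],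
      exists2 t, t \in pa_Delta A2 & [/\ t.1.1.1 = pa_q0 A2, s = None, a = t.1.1.2, w = vadd mk2 (emb2 t.1.2) & s' = Some (inr t.2)],
      exists2 t, t \in pa_Delta A1 & [/\ s = Some (inl t.1.1.1), a = t.1.1.2, w = emb1 t.1.2 & s' = Some (inl t.2)] |
      exists2 t, t \in pa_Delta A2 & [/\ s = Some (inr t.1.1.1), a = t.1.1.2, w = emb2 t.1.2 & s' = Some (inr t.2)]].
Proof.
rewrite !mem_cat => /or4P [] /mapP [t Ht [-> -> -> ->]].
- by move: Ht; rewrite mem_filter => /andP [/eqP h Ht]; apply: Or41; exists t.
- by move: Ht; rewrite mem_filter => /andP [/eqP h Ht]; apply: Or42; exists t.
- by apply: Or43; exists t.
- by apply: Or44; exists t.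
Qed.

Lemma h0f1 a v q' : (pa_q0 A1, a, v, q') \in pa_Delta A1 ->
   (pa_q0 AV, a, vadd mk1 (emb1 v), Some (inl q')) \in pa_Delta AV.
Proof.
move=> H; rewrite /= /DeltaV !mem_cat; apply/orP; left.
by apply/mapP; exists (pa_q0 A1, a, v, q') => //; rewrite mem_filter eqxx.
Qed.
Lemma h0f2 a v q' : (pa_q0 A2, a, v, q') \in pa_Delta A2 ->
   (pa_q0 AV, a, vadd mk2 (emb2 v), Some (inr q')) \in pa_Delta AV.
Proof.
move=> H; rewrite /= /DeltaV !mem_cat; apply/orP; right; apply/orP; left.
by apply/mapP; exists (pa_q0 A2, a, v, q') => //; rewrite mem_filter eqxx.
Qed.
Lemma hsf1 q a v q' : (q, a, v, q') \in pa_Delta A1 ->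
   (Some (inl q) : QV, a, emb1 v, Some (inl q')) \in pa_Delta AV.
Proof.
move=> H; rewrite /= /DeltaV !mem_cat; apply/orP; right; apply/orP; right; apply/orP; left.
by apply/mapP; exists (q, a, v, q').
Qed.
Lemma hsf2 q a v q' : (q, a, v, q') \in pa_Delta A2 ->
   (Some (inr q) : QV, a, emb2 v, Some (inr q')) \in pa_Delta AV.
Proof.
move=> H; rewrite /= /DeltaV !mem_cat; apply/orP; right; apply/orP; right; apply/orP; right.
by apply/mapP; exists (q, a, v, q').
Qed.
Lemma h0b1 a w q' : (pa_q0 AV, a, w, Some (inl q')) \in pa_Delta AV ->
  (pa_q0 A1, a, pr1 w, q') \in pa_Delta A1 /\ w = vadd mk1 (emb1 (pr1 w)).
Proof.
case/memV => -[[[[x a'] v'] y] Ht] /= []; try by intros; congruence.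
by move=> ex _ -> -> [->]; rewrite pr1mK -ex.
Qed.
Lemma h0b2 a w q' : (pa_q0 AV, a, w, Some (inr q')) \in pa_Delta AV ->
  (pa_q0 A2, a, pr2 w, q') \in pa_Delta A2 /\ w = vadd mk2 (emb2 (pr2 w)).
Proof.
case/memV => -[[[[x a'] v'] y] Ht] /= []; try by intros; congruence.
by move=> ex _ -> -> [->]; rewrite pr2mK -ex.
Qed.
Lemma hsb1 q a w s' : (Some (inl q) : QV, a, w, s') \in pa_Delta AV ->
  exists q', [/\ s' = Some (inl q'), (q, a, pr1 w, q') \in pa_Delta A1 & w = emb1 (pr1 w)].
Proof.
case/memV => -[[[[x a'] v'] y] Ht] /= []; try by intros; congruence.
by move=> [ex] -> -> ->; exists y; rewrite pr1K ex.
Qed.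
Lemma hsb2 q a w s' : (Some (inr q) : QV, a, w, s') \in pa_Delta AV ->
  exists q', [/\ s' = Some (inr q'), (q, a, pr2 w, q') \in pa_Delta A2 & w = emb2 (pr2 w)].
Proof.
case/memV => -[[[[x a'] v'] y] Ht] /= []; try by intros; congruence.
by move=> [ex] -> -> ->; exists y; rewrite pr2K ex.
Qed.
Lemma hC1 x : in_semilinear (pa_C AV) (vadd mk1 (emb1 x)) <-> in_semilinear (pa_C A1) x.
Proof.
apply: semi_mark; [exact: emb1_add|exact: emb1_zero|exact: emb1_scale
  |exact: emb2_add|exact: emb2_zero|exact: emb2_scale| |exact: sep12].
by move=> a b /(congr1 pr1); rewrite !pr1mK.
Qed.
Lemma hC2 x : in_semilinear (pa_C AV) (vadd mk2 (emb2 x)) <-> in_semilinear (pa_C A2) x.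
Proof.
rewrite /= /CV semi_catC.
apply: semi_mark; [exact: emb2_add|exact: emb2_zero|exact: emb2_scale
  |exact: emb1_add|exact: emb1_zero|exact: emb1_scale| |].
  by move=> a b /(congr1 pr2); rewrite !pr2mK.
by move=> a b /esym; apply: sep12.
Qed.

Lemma AV_correct alpha :
  RPBA_accepts AV alpha <-> RPBA_accepts A1 alpha \/ RPBA_accepts A2 alpha.
Proof.
split; last first.
  case=> H.
    apply: (@branch_f S _ _ A1 AV (fun q => Some (inl q)) emb1 mk1) H.
    - exact: emb1_add. - exact: emb1_zero. - exact: h0f1. - exact: hsf1.
    - by move=> q; rewrite inE. - exact: hC1.
  apply: (@branch_f S _ _ A2 AV (fun q => Some (inr q)) emb2 mk2) H.
  - exact: emb2_add. - exact: emb2_zero. - exact: h0f2. - exact: hsf2.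
  - by move=> q; rewrite inE. - exact: hC2.
move=> [p [v [p0 [Htr [Hc Hinf]]]]].
have := Htr 0; rewrite p0 => /memV [] [[[[x a'] v'] y] Ht] //= [].
- move=> _ _ _ _ e; left.
  apply: (@branch_b S _ _ A1 AV (fun q => Some (inl q)) emb1 mk1 pr1 _ _ _ _ _ _ _ alpha p v p0 Htr Hc Hinf).
  all: try by [exists y | move=> ?? []; move=> -> | exact: emb1_add | exact: emb1_zero
       | exact: h0b1 | exact: hsb1 | move=> q; rewrite inE | exact: hC1].
- move=> _ _ _ _ e; right.
  apply: (@branch_b S _ _ A2 AV (fun q => Some (inr q)) emb2 mk2 pr2 _ _ _ _ _ _ _ alpha p v p0 Htr Hc Hinf).
  all: try by [exists y | move=> ?? []; move=> -> | exact: emb2_add | exact: emb2_zero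
       | exact: h0b2 | exact: hsb2 | move=> q; rewrite inE | exact: hC2].
- by [].
- by [].
Qed.
End Union.

Lemma RPBA_union (S : finType) (L1 L2 : (nat -> S) -> Prop) :
  RPBA_recognizable L1 -> RPBA_recognizable L2 ->
  RPBA_recognizable (fun alpha => L1 alpha \/ L2 alpha).
Proof.
move=> [d1 [A1 H1]] [d2 [A2 H2]]; exists (d1 + d2 + 2), (AV A1 A2) => alpha.
by rewrite AV_correct H1 H2.
Qed.

Lemma single (S : finType) (U V : seq S -> Prop) :
  Parikh_recognizable U -> regular V -> RPBA_recognizable (in_UVomega U V).
Proof.
move=> [d [A HA]] [B HB]; exists d, (AU A B) => alpha; split.
  exact: fwd.
exact: bwd.
Qed.

Lemma RPBA_ext (S : finType) (L L' : (nat -> S) -> Prop) :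
  (forall a, L a <-> L' a) -> RPBA_recognizable L -> RPBA_recognizable L'.
Proof. by move=> h [d [A HA]]; exists d, A => a; rewrite -h. Qed.

Lemma RPBA_empty (S : finType) : RPBA_recognizable (fun _ : nat -> S => False).
Proof.
exists 0, (@MkPA S 0 unit tt [::] set0 [::]) => a; split => // -[p [v [_ [H _]]]].
by have := H 0.
Qed.

Unset Implicit Arguments.

Theorem corollary2 (Sigma : finType) (n : nat) (U V : nat -> seq Sigma -> Prop) :
  (forall i, i < n -> Parikh_recognizable (U i)) ->
  (forall i, i < n -> regular (V i)) ->
  RPBA_recognizable (fun alpha : nat -> Sigma =>
    exists2 i, i < n & in_UVomega (U i) (V i) alpha).
Proof.
elim: n => [|n IH] HU HV.
  by apply: RPBA_ext (RPBA_empty Sigma) => a; split => // -[i].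
have R := RPBA_union (IH (fun i h => HU i (ltnW h)) (fun i h => HV i (ltnW h)))
                     (single (HU n (ltnSn n)) (HV n (ltnSn n))).
apply: RPBA_ext R => a; split.
  case=> [[i hi H]|H]; first by exists i => //; exact: ltnW.
  by exists n.
case=> i; rewrite ltnS leq_eqVlt => /orP [/eqP ->|hi] H; [right|left] => //.
by exists i.
Qed.
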